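(* Consider any finite set of votes published so far. Let $H$ be a set of validators holding at least $\frac23$ of the total deposit such that no validator in $H$ has violated slashing condition I or II, and such that the source of every vote previously published by a validator in $H$ is a justified checkpoint (with respect to the current set of published votes). Let $a$ be a justified checkpoint of maximal height, and let $B$ be the maximum of $h(a)$ and the heights of all targets of all votes published so far by any validator. Suppose $a'$ is a descendant of $a$ with $h(a')=B+1$ and $a''$ is a direct child of $a'$. If every validator in $H$ additionally publishes the two votes with (source, target) $=(a,a')$ and $(a',a'')$, then no validator in $H$ violates slashing condition I or II, and $a'$ becomes finalized.
   Context: Checkpoints form a rooted tree (the checkpoint tree) with root $r$. For a checkpoint $c$, its height $h(c)$ is the number of edges on the path from $c$ to $r$, so $h(r)=0$ and a child has height one more than its parent. There is a fixed finite set of validators, each with a positive deposit; fractions of validators are always deposit-weighted. A vote is a signed message $\langle \nu, s, t, h(s), h(t)\rangle$ from validator $\nu$, where $s$ (source) and $t$ (target) are checkpoints and $s$ is a strict ancestor of $t$. A supermajority link $s\to t$ is an ordered pair of checkpoints such that validators holding at least $\frac23$ of the total deposit have published the vote with source $s$ and target $t$. A checkpoint $c$ is justified if $c=r$ or there is a supermajority link $c'\to c$ with $c'$ justified. A checkpoint $c$ is finalized if $c=r$, or $c$ is justified and there is a supermajority link $c\to c'$ where $c'$ is a direct child of $c$. Slashing conditions: a validator $\nu$ violates a slashing condition if it publishes two distinct votes $\langle \nu,s_1,t_1,h(s_1),h(t_1)\rangle$ and $\langle \nu,s_2,t_2,h(s_2),h(t_2)\rangle$ such that either (I) $h(t_1)=h(t_2)$,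 or (II) $h(s_1)<h(s_2)<h(t_2)<h(t_1)$. *)

(* Defs.v *)
From HB Require Import structures.
From mathcomp Require Import all_boot all_order all_algebra.
Set Implicit Arguments. Unset Strict Implicit. Unset Printing Implicit Defensive.
Import Order.TTheory GRing.Theory Num.Theory.

Section Casper.
Variables (T : eqType) (r : T) (parent : T -> T) (h : T -> nat).

(* Rooted tree axioms: the root is its own "parent" (sentinel) and has
   height 0; every other checkpoint has height one more than its parent.
   Hence iterating [parent] from any checkpoint reaches [r]. *)
Definition is_tree : Prop :=
  [/\ parent r = r, h r = 0%N & forall c, c <> r -> h c = (h (parent c)).+1].

Definition ancestor (s t : T) : Prop := exists k, iter k parent t = s.

Definition strict_ancestor (s t : T) : Prop :=
  exists k, (0 < k <= h t)%N /\ iter k parent t = s.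

Definition direct_child (c c' : T) : Prop := c' <> r /\ parent c' = c.

Variables (V : finType) (R : realFieldType) (dep : V -> R).

(* A vote <nu, s, t, h s, h t> is represented by ((nu, s), t); the heights
   are determined by s and t. *)
Definition vote := (V * T * T)%type.
Definition voter (x : vote) : V := x.1.1.
Definition vsource (x : vote) : T := x.1.2.
Definition vtarget (x : vote) : T := x.2.

Definition valid_vote (x : vote) : Prop := strict_ancestor (vsource x) (vtarget x).

Local Open Scope ring_scope.

Definition two_thirds (S : {set V}) : Prop :=
  2%:R * (\sum_(v : V) dep v) <= 3%:R * (\sum_(v in S) dep v).

Definition sm_link (vs : seq vote) (s t : T) : Prop :=
  two_thirds [set v | (v, s, t) \in vs].

Inductive justified (vs : seq vote) : T -> Prop :=
| justified_root : justified vs r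
| justified_link c' c : justified vs c' -> sm_link vs c' c -> justified vs c.

Definition finalized (vs : seq vote) (c : T) : Prop :=
  c = r \/ (justified vs c /\ exists c', direct_child c c' /\ sm_link vs c c').

Definition slashed (vs : seq vote) (nu : V) : Prop :=
  exists s1 t1 s2 t2,
    [/\ (nu, s1, t1) \in vs, (nu, s2, t2) \in vs, (s1, t1) != (s2, t2) &
        h t1 = h t2 \/ (h s1 < h s2 < h t2)%N && (h t2 < h t1)%N].

End Casper.

(* Main.v *)
Require Import Defs.
From HB Require Import structures.
From mathcomp Require Import all_boot all_order all_algebra.
From mathcomp Require Import zify.
Import Order.TTheory GRing.Theory Num.Theory.

Lemma max_seq_ge (T' : eqType) (f : T' -> nat) (s : seq T') x :
  x \in s -> (f x <= \max_(y <- s) f y)%N.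
Proof.
elim: s => [//|y s IH]; rewrite inE big_cons => /orP[/eqP->|/IH H].
  exact: leq_maxl.
exact: leq_trans H (leq_maxr _ _).
Qed.

Lemma two_thirds_mono (V : finType) (R : realFieldType) (dep : V -> R)
  (Hdep : forall v, (0 < dep v)%R) (S S' : {set V}) :
  S \subset S' -> two_thirds dep S -> two_thirds dep S'.
Proof.
move=> /subsetP sub; rewrite /two_thirds => H.
apply: (le_trans H); rewrite ler_pM2l ?ltr0n //.
rewrite [X in (X <= _)%R]big_mkcond [X in (_ <= X)%R]big_mkcond /=.
apply: ler_sum => v _.
case: ifP => vS; first by rewrite (sub _ vS).
by case: ifP => // _; apply: ltW.
Qed.

Arguments two_thirds_mono {V R dep}.
Lemma justified_mono (T : eqType) (r : T) (V : finType) (R : realFieldType)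
  (dep : V -> R) (Hdep : forall v, (0 < dep v)%R) (vs vs' : seq (vote T V)) c :
  {subset vs <= vs'} -> justified r dep vs c -> justified r dep vs' c.
Proof.
move=> sub; elim => [|c' c0 _ IH Hl]; first exact: justified_root.
apply: justified_link IH _.
rewrite /sm_link; apply: (two_thirds_mono Hdep) (Hl); apply/subsetP => v; rewrite !inE.
exact: sub.
Qed.

Arguments justified_mono {T r V R dep} Hdep {vs vs' c}.
Theorem theorem2
  (T : eqType) (r : T) (parent : T -> T) (h : T -> nat)
  (Htree : is_tree r parent h)
  (V : finType) (R : realFieldType) (dep : V -> R)
  (Hdep : forall v, (0 < dep v)%R)
  (vs : seq (vote T V))
  (Hvalid : forall x, x \in vs -> valid_vote parent h x)
  (H : {set V})
  (HH : two_thirds dep H)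
  (Hnoslash : forall v, v \in H -> ~ slashed h vs v)
  (Hsrc : forall v s t, v \in H -> (v, s, t) \in vs -> justified r dep vs s)
  (a : T)
  (Ha : justified r dep vs a)
  (Hamax : forall c, justified r dep vs c -> (h c <= h a)%N)
  (B : nat)
  (HB : B = maxn (h a) (\max_(x <- vs) h (vtarget x)))
  (a' a'' : T)
  (Ha' : ancestor parent a a') (Ha'h : h a' = B.+1)
  (Ha'' : direct_child r parent a' a'') :
  let vs' := vs ++ [seq (v, a, a') | v <- enum H]
                ++ [seq (v, a', a'') | v <- enum H] in
  (forall v, v \in H -> ~ slashed h vs' v) /\ finalized r parent dep vs' a'.
Proof.
move=> vs'.
have Ha''h : h a'' = B.+2.
  case: Htree => _ _ Hh; case: Ha'' => nr pa.
  by rewrite Hh // pa Ha'h.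
have HaB : (h a <= B)%N by rewrite HB leq_maxl.
have HtB : forall x, x \in vs -> (h (vtarget x) <= B)%N.
  move=> x xin; rewrite HB; apply: leq_trans (leq_maxr _ _).
  exact: (@max_seq_ge _ (fun y => h (vtarget y))).
have cls : forall v s t, (v, s, t) \in vs' ->
   (v, s, t) \in vs \/ (v \in H /\ ((s = a /\ t = a') \/ (s = a' /\ t = a''))).
  move=> v s t; rewrite !mem_cat => /orP[->|/orP[]]; first by left.
    by case/mapP => w; rewrite mem_enum => wH [-> -> ->]; right; split; [|left].
  by case/mapP => w; rewrite mem_enum => wH [-> -> ->]; right; split; [|right].
have subvs : {subset vs <= vs'} by move=> x xin; rewrite mem_cat xin.
split.
- move=> v vH [s1 [t1 [s2 [t2 [m1 m2 neq cond]]]]].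
  have old : forall s t, (v, s, t) \in vs -> (h t <= B)%N /\ (h s <= h a)%N.
    move=> s t m; split; first exact: (HtB _ m).
    by apply: Hamax; apply: Hsrc vH m.
  have c1 := cls _ _ _ m1; have c2 := cls _ _ _ m2.
  move: c1 c2 neq cond.
  case => [o1|[_ [[-> ->]|[-> ->]]]];
  case => [o2|[_ [[-> ->]|[-> ->]]]] => neq cond.
  + by apply: (Hnoslash v vH); exists s1, t1, s2, t2; split.
  + move: (old _ _ o1) cond => [h1 _]; rewrite Ha'h => -[E|/andP[_ E]]; lia.
  + move: (old _ _ o1) cond => [h1 _]; rewrite Ha''h => -[E|/andP[_ E]]; lia.
  + move: (old _ _ o2) cond => [h1 h2]; rewrite Ha'h => -[E|/andP[/andP[E1 E2] E3]]; lia.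
  + by rewrite eqxx in neq.
  + by move: cond; rewrite Ha'h Ha''h => -[E|/andP[/andP[E1 E2] E3]]; lia.
  + move: (old _ _ o2) cond => [h1 h2]; rewrite Ha'h Ha''h => -[E|/andP[/andP[E1 E2] E3]]; lia.
  + by move: cond; rewrite Ha'h Ha''h => -[E|/andP[/andP[E1 E2] E3]]; lia.
  + by rewrite eqxx in neq.
- right; split.
    apply: (justified_link (c' := a)); first exact: (justified_mono Hdep subvs Ha).
    rewrite /sm_link; apply: (two_thirds_mono Hdep _ _ _ HH); apply/subsetP => v vH; rewrite inE.
    by rewrite !mem_cat; apply/orP; right; apply/orP; left;
       apply/mapP; exists v; first rewrite mem_enum.
  exists a''; split => //.
  rewrite /sm_link; apply: (two_thirds_mono Hdep _ _ _ HH); apply/subsetP => v vH; rewrite inE.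
  by rewrite !mem_cat; apply/orP; right; apply/orP; right;
     apply/mapP; exists v; first rewrite mem_enum.
Qed.
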